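(* Let $A$ be a Banach algebra with $A^*A=A^*$. If $aa''\in Z_1(A^{**})$ for all $a\in A$ and $a''\in A^{**}$, then $A$ is Arens regular.
   Context: $A^{**}$ carries the first Arens product: for $a''=w^*\text{-}\lim_\alpha a_\alpha$, $b''=w^*\text{-}\lim_\beta b_\beta$ ($a_\alpha,b_\beta\in A$) and $a'\in A^*$, $\langle a''b'',a'\rangle=\lim_\alpha\lim_\beta\langle a',a_\alpha b_\beta\rangle$; the second Arens product is $\langle a''\circ b'',a'\rangle=\lim_\beta\lim_\alpha\langle a',a_\alpha b_\beta\rangle$. $A$ is Arens regular if the two products coincide. $Z_1(A^{**})$ is the set of $a''\in A^{**}$ such that $b''\mapsto a''b''$ is weak$^*$-to-weak$^*$ continuous. For $a'\in A^*$, $a\in A$, $\langle a'a,b\rangle=\langle a',ab\rangle$, and $A^*A=\{a'a:a'\in A^*,a\in A\}$. *)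

(* Defs.v *)
From Stdlib Require Import Reals.
Open Scope R_scope.

Record BanachAlgebra := {
  ba_car :> Type;
  ba_zero : ba_car;
  ba_add : ba_car -> ba_car -> ba_car;
  ba_opp : ba_car -> ba_car;
  ba_scal : R -> ba_car -> ba_car;
  ba_mul : ba_car -> ba_car -> ba_car;
  ba_norm : ba_car -> R;
  ba_addA : forall x y z, ba_add x (ba_add y z) = ba_add (ba_add x y) z;
  ba_addC : forall x y, ba_add x y = ba_add y x;
  ba_add0 : forall x, ba_add x ba_zero = x;
  ba_addN : forall x, ba_add x (ba_opp x) = ba_zero;
  ba_scal1 : forall x, ba_scal 1 x = x;
  ba_scalA : forall r s x, ba_scal r (ba_scal s x) = ba_scal (r * s) x;
  ba_scalDr : forall r x y, ba_scal r (ba_add x y) = ba_add (ba_scal r x) (ba_scal r y);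
  ba_scalDl : forall r s x, ba_scal (r + s) x = ba_add (ba_scal r x) (ba_scal s x);
  ba_norm_ge0 : forall x, 0 <= ba_norm x;
  ba_norm_eq0 : forall x, ba_norm x = 0 -> x = ba_zero;
  ba_normZ : forall r x, ba_norm (ba_scal r x) = Rabs r * ba_norm x;
  ba_normD : forall x y, ba_norm (ba_add x y) <= ba_norm x + ba_norm y;
  ba_complete : forall u : nat -> ba_car,
    (forall eps, 0 < eps -> exists N, forall m n, (N <= m)%nat -> (N <= n)%nat ->
        ba_norm (ba_add (u m) (ba_opp (u n))) < eps) ->
    exists l, forall eps, 0 < eps -> exists N, forall n, (N <= n)%nat ->
        ba_norm (ba_add (u n) (ba_opp l)) < eps;
  ba_mulA : forall x y z, ba_mul x (ba_mul y z) = ba_mul (ba_mul x y) z;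
  ba_mulDl : forall x y z, ba_mul (ba_add x y) z = ba_add (ba_mul x z) (ba_mul y z);
  ba_mulDr : forall x y z, ba_mul x (ba_add y z) = ba_add (ba_mul x y) (ba_mul x z);
  ba_mulZl : forall r x y, ba_mul (ba_scal r x) y = ba_scal r (ba_mul x y);
  ba_mulZr : forall r x y, ba_mul x (ba_scal r y) = ba_scal r (ba_mul x y);
  ba_normM : forall x y, ba_norm (ba_mul x y) <= ba_norm x * ba_norm y
}.

Section Arens.
Variable A : BanachAlgebra.

Definition is_dual (f : A -> R) : Prop :=
  (forall x y, f (ba_add A x y) = f x + f y) /\
  (forall r x, f (ba_scal A r x) = r * f x) /\
  (exists M, forall x, Rabs (f x) <= M * ba_norm A x).

(* A^{**} : bounded linear functionals on A^{*} (with the operator norm on A^{*},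
   written out: |F f| <= M * c whenever c >= 0 bounds f) *)
Definition is_bidual (F : (A -> R) -> R) : Prop :=
  (forall f g, is_dual f -> is_dual g -> F (fun x => f x + g x) = F f + F g) /\
  (forall r f, is_dual f -> F (fun x => r * f x) = r * F f) /\
  (exists M, forall f c, is_dual f -> 0 <= c ->
      (forall x, Rabs (f x) <= c * ba_norm A x) -> Rabs (F f) <= M * c).

Definition dmulr (f : A -> R) (a : A) : A -> R := fun b => f (ba_mul A a b).

Definition hat (a : A) : (A -> R) -> R := fun f => f a.

(* first Arens product: <a''b'', a'> = <a'', b''a'>, <b''a', a> = <b'', a'a>;
   equals lim_alpha lim_beta <a', a_alpha b_beta> *)
Definition arens1 (F G : (A -> R) -> R) : (A -> R) -> R :=
  fun f => F (fun a => G (dmulr f a)).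

(* second Arens product: equals lim_beta lim_alpha <a', a_alpha b_beta> *)
Definition arens2 (F G : (A -> R) -> R) : (A -> R) -> R :=
  fun f => G (fun b => F (fun a => f (ba_mul A a b))).

Definition arens_regular : Prop :=
  forall F G, is_bidual F -> is_bidual G ->
    forall f, is_dual f -> arens1 F G f = arens2 F G f.

Definition dual_factors : Prop :=
  (forall f a, is_dual f -> is_dual (dmulr f a)) /\
  (forall f, is_dual f -> exists g a, is_dual g /\ forall x, f x = dmulr g a x).

End Arens.

Record directed := {
  dir_car :> Type;
  dir_le : dir_car -> dir_car -> Prop;
  dir_inh : dir_car;
  dir_refl : forall i, dir_le i i;
  dir_trans : forall i j k, dir_le i j -> dir_le j k -> dir_le i k;
  dir_up : forall i j, exists k, dir_le i k /\ dir_le j k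
}.

Definition net_conv (D : directed) (x : D -> R) (l : R) : Prop :=
  forall eps, 0 < eps -> exists i0, forall i, dir_le D i0 i -> Rabs (x i - l) < eps.

Definition wstar_conv (A : BanachAlgebra) (D : directed)
  (N : D -> (A -> R) -> R) (F : (A -> R) -> R) : Prop :=
  forall f, is_dual A f -> net_conv D (fun i => N i f) (F f).

Definition Z1 (A : BanachAlgebra) (F : (A -> R) -> R) : Prop :=
  forall (D : directed) (N : D -> (A -> R) -> R) (G : (A -> R) -> R),
    (forall i, is_bidual A (N i)) -> is_bidual A G ->
    wstar_conv A D N G ->
    wstar_conv A D (fun i => arens1 A F (N i)) (arens1 A F G).

(* Main.v *)
Require Import Defs.
From Stdlib Require Import Reals.
From Stdlib Require Import Lra List Classical FunctionalExtensionality IndefiniteDescription.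
Open Scope R_scope.
Import ListNotations.

Definition lin (A : BanachAlgebra) (f : A -> R) : Prop :=
  (forall x y, f (ba_add A x y) = f x + f y) /\ (forall r x, f (ba_scal A r x) = r * f x).

Definition Ker (A : BanachAlgebra) (S : list (A -> R)) (x : A) : Prop :=
  forall g, In g S -> g x = 0.

Fixpoint InSpan (A : BanachAlgebra) (S : list (A -> R)) (f : A -> R) : Prop :=
  match S with
  | nil => forall x, f x = 0
  | g :: S' => exists c, InSpan A S' (fun x => f x - c * g x)
  end.

Lemma lin_comb (A : BanachAlgebra) f g c : lin A f -> lin A g -> lin A (fun x => f x - c * g x).
Proof. intros [Hf1 Hf2] [Hg1 Hg2]; split; intros; rewrite ?Hf1, ?Hg1, ?Hf2, ?Hg2; ring. Qed.

Lemma dual_lin (A : BanachAlgebra) f : is_dual A f -> lin A f.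
Proof. intros [H1 [H2 _]]; split; assumption. Qed.

Lemma dual_comb (A : BanachAlgebra) f g c : is_dual A f -> is_dual A g ->
  is_dual A (fun x => f x - c * g x).
Proof.
  intros [Hf1 [Hf2 [Mf Hf]]] [Hg1 [Hg2 [Mg Hg]]]; split; [|split].
  - intros; rewrite Hf1, Hg1; ring.
  - intros; rewrite Hf2, Hg2; ring.
  - exists (Mf + Rabs c * Mg). intro x.
    unfold Rminus. eapply Rle_trans; [apply Rabs_triang|].
    rewrite Rabs_Ropp, Rabs_mult.
    specialize (Hf x); specialize (Hg x).
    assert (Rabs c * Rabs (g x) <= Rabs c * (Mg * ba_norm A x)) by
      (apply Rmult_le_compat_l; [apply Rabs_pos|exact Hg]).
    nra.
Qed.

Lemma dual_scal (A : BanachAlgebra) g c : is_dual A g -> is_dual A (fun x => c * g x).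
Proof.
  intros [Hg1 [Hg2 [Mg Hg]]]; split; [|split].
  - intros; rewrite Hg1; ring.
  - intros; rewrite Hg2; ring.
  - exists (Rabs c * Mg). intro x. rewrite Rabs_mult, Rmult_assoc.
    apply Rmult_le_compat_l; [apply Rabs_pos|exact (Hg x)].
Qed.

Lemma span_lemma (A : BanachAlgebra) (S : list (A -> R)) :
  (forall g, In g S -> lin A g) ->
  forall f, lin A f -> (forall x, Ker A S x -> f x = 0) -> InSpan A S f.
Proof.
  induction S as [|g S IH]; intros HS f Hf Hk; simpl.
  - intro x. apply Hk. intros h [].
  - assert (HS' : forall h, In h S -> lin A h) by (intros h Hh; apply HS; right; exact Hh).
    assert (Hg : lin A g) by (apply HS; left; reflexivity).
    destruct (classic (exists k, Ker A S k /\ g k <> 0)) as [[k [Hk1 Hk2]]|Hno].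
    + exists (f k / g k). apply IH; [exact HS' | apply lin_comb; assumption |].
      intros x Hx.
      set (y := ba_add A x (ba_scal A (- (g x / g k)) k)).
      assert (Hy : Ker A (g :: S) y).
      { intros h [<-|Hh].
        - unfold y. destruct Hg as [Ha Hs]. rewrite Ha, Hs. field. exact Hk2.
        - unfold y. destruct (HS' h Hh) as [Ha Hs]. rewrite Ha, Hs, (Hx h Hh), (Hk1 h Hh). ring. }
      specialize (Hk y Hy). unfold y in Hk. destruct Hf as [Ha Hs]. rewrite Ha, Hs in Hk.
      replace (f x - f k / g k * g x) with (f x + - (g x / g k) * f k) by (field; exact Hk2).
      exact Hk.
    + exists 0. apply IH; [exact HS' | apply lin_comb; assumption |].
      intros x Hx. rewrite Hk; [ring|]. intros h [<-|Hh].
      * destruct (Req_dec (g x) 0) as [E|E]; [exact E|].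
        exfalso; apply Hno; exists x; split; assumption.
      * apply Hx; exact Hh.
Qed.

Lemma eval_lemma (A : BanachAlgebra) (G : (A -> R) -> R) (a : A) (S : list (A -> R)) :
  is_bidual A G -> (forall g, In g S -> is_dual A g) ->
  (forall g, In g S -> g a = G g) ->
  forall f, is_dual A f -> InSpan A S f -> f a = G f.
Proof.
  intros HG. destruct HG as [Hadd [Hsc _]].
  induction S as [|g S IH]; intros HS Ha f Hf Hsp; simpl in Hsp.
  - rewrite Hsp.
    assert (E : f = fun x => 0 * f x) by (extensionality x; rewrite Hsp; ring).
    rewrite E, Hsc by exact Hf. ring.
  - destruct Hsp as [c Hc].
    assert (Hgd : is_dual A g) by (apply HS; left; reflexivity).
    assert (Hh : is_dual A (fun x => f x - c * g x)) by (apply dual_comb; assumption).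
    assert (IH' := IH (fun h Hh => HS h (or_intror Hh)) (fun h Hh => Ha h (or_intror Hh))
                     _ Hh Hc).
    simpl in IH'.
    assert (E : G f = G (fun x => (fun x => f x - c * g x) x + (fun x => c * g x) x))
      by (f_equal; extensionality x; ring).
    rewrite E, Hadd by (try apply dual_scal; assumption).
    rewrite Hsc by assumption. rewrite <- IH', <- (Ha g (or_introl eq_refl)). ring.
Qed.

Lemma interp (A : BanachAlgebra) (G : (A -> R) -> R) (S : list (A -> R)) :
  is_bidual A G -> (forall g, In g S -> is_dual A g) ->
  exists a, forall g, In g S -> g a = G g.
Proof.
  intros HG. induction S as [|f S IH]; intros HS.
  - exists (ba_zero A). intros g [].
  - assert (HS' : forall h, In h S -> is_dual A h) by (intros h Hh; apply HS; right; exact Hh).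
    assert (Hf : is_dual A f) by (apply HS; left; reflexivity).
    destruct (IH HS') as [a0 Ha0].
    destruct (classic (exists k, Ker A S k /\ f k <> 0)) as [[k [Hk1 Hk2]]|Hno].
    + exists (ba_add A a0 (ba_scal A ((G f - f a0) / f k) k)).
      intros h [<-|Hh].
      * destruct (dual_lin A f Hf) as [Ha Hs]. rewrite Ha, Hs. field. exact Hk2.
      * destruct (dual_lin A h (HS' h Hh)) as [Ha Hs]. rewrite Ha, Hs, (Ha0 h Hh), (Hk1 h Hh). ring.
    + exists a0. intros h [<-|Hh]; [|apply Ha0; exact Hh].
      apply (eval_lemma A G a0 S HG HS' Ha0 f Hf).
      apply span_lemma; [intros g Hg; apply dual_lin, HS', Hg | apply dual_lin, Hf |].
      intros x Hx. destruct (Req_dec (f x) 0) as [E|E]; [exact E|].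
      exfalso; apply Hno; exists x; split; assumption.
Qed.

Definition Ddir (A : BanachAlgebra) : directed.
Proof.
  refine {| dir_car := list {f : A -> R | is_dual A f}; dir_le := fun S T => incl S T;
            dir_inh := nil |}.
  - intro; apply incl_refl.
  - intros i j k; apply incl_tran.
  - intros i j; exists (i ++ j); split; [apply incl_appl|apply incl_appr]; apply incl_refl.
Defined.

Lemma interp_fun (A : BanachAlgebra) (G : (A -> R) -> R) : is_bidual A G ->
  exists af : list {f : A -> R | is_dual A f} -> A,
    forall S g, In g S -> proj1_sig g (af S) = G (proj1_sig g).
Proof.
  intros HG.
  assert (Hd : forall S : list {f : A -> R | is_dual A f},
             forall g, In g (map (@proj1_sig _ _) S) -> is_dual A g).
  { intros S g Hg. apply in_map_iff in Hg. destruct Hg as [[x Hx] [<- _]]. exact Hx. }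
  exists (fun S => proj1_sig (constructive_indefinite_description _
                    (interp A G (map (@proj1_sig _ _) S) HG (Hd S)))).
  intros S g Hg.
  destruct (constructive_indefinite_description _ _) as [a Ha]; simpl.
  apply Ha. apply in_map. exact Hg.
Qed.

Lemma hat_bidual (A : BanachAlgebra) (a : A) : is_bidual A (hat A a).
Proof.
  split; [|split].
  - intros; reflexivity.
  - intros; reflexivity.
  - exists (ba_norm A a). intros f c Hf Hc Hb. unfold hat. rewrite Rmult_comm. apply Hb.
Qed.


Lemma psi_dual (A : BanachAlgebra) (g : A -> R) (b : A) (Mg : R) : is_dual A g ->
  (forall x, Rabs (g x) <= Mg * ba_norm A x) ->
  is_dual A (fun a => g (ba_mul A a b)) /\
  (forall a, Rabs (g (ba_mul A a b)) <= (Rabs Mg * ba_norm A b) * ba_norm A a).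
Proof.
  intros [Hg1 [Hg2 _]] Hb.
  assert (Hbd : forall a, Rabs (g (ba_mul A a b)) <= (Rabs Mg * ba_norm A b) * ba_norm A a).
  { intro a. eapply Rle_trans; [apply Hb|].
    eapply Rle_trans; [apply Rmult_le_compat_r; [apply ba_norm_ge0|apply Rle_abs]|].
    eapply Rle_trans; [apply Rmult_le_compat_l; [apply Rabs_pos|apply ba_normM]|].
    right; ring. }
  split; [|exact Hbd]. split; [|split].
  - intros; rewrite ba_mulDl, Hg1; reflexivity.
  - intros; rewrite ba_mulZl, Hg2; reflexivity.
  - exists (Rabs Mg * ba_norm A b). exact Hbd.
Qed.

Lemma phi_dual (A : BanachAlgebra) (H : (A -> R) -> R) (g : A -> R) :
  is_bidual A H -> is_dual A g -> is_dual A (fun b => H (fun a => g (ba_mul A a b))).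
Proof.
  intros [Hadd [Hsc [MH HB]]] Hg.
  assert (Hg' := Hg). destruct Hg' as [Hg1 [Hg2 [Mg HMg]]].
  split; [|split].
  - intros x y.
    assert (E : (fun a => g (ba_mul A a (ba_add A x y))) =
                (fun a => g (ba_mul A a x) + g (ba_mul A a y)))
      by (extensionality a; rewrite ba_mulDr, Hg1; reflexivity).
    rewrite E. apply Hadd; apply (psi_dual A g _ Mg Hg HMg).
  - intros r x.
    assert (E : (fun a => g (ba_mul A a (ba_scal A r x))) =
                (fun a => r * g (ba_mul A a x)))
      by (extensionality a; rewrite ba_mulZr, Hg2; reflexivity).
    rewrite E. apply Hsc; apply (psi_dual A g _ Mg Hg HMg).
  - exists (MH * Rabs Mg). intro x.
    destruct (psi_dual A g x Mg Hg HMg) as [Hd Hbd].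
    eapply Rle_trans; [apply (HB _ (Rabs Mg * ba_norm A x) Hd)|].
    + apply Rmult_le_pos; [apply Rabs_pos|apply ba_norm_ge0].
    + exact Hbd.
    + right; ring.
Qed.

Lemma H_bidual (A : BanachAlgebra) (F : (A -> R) -> R) (c : A) :
  dual_factors A -> is_bidual A F -> is_bidual A (arens1 A (hat A c) F).
Proof.
  intros [Hdf _] [Hadd [Hsc [MF HB]]]. split; [|split].
  - intros f g Hf Hg. unfold arens1, hat.
    change (F (fun x => dmulr A f c x + dmulr A g c x) = F (dmulr A f c) + F (dmulr A g c)).
    apply Hadd; apply Hdf; assumption.
  - intros r f Hf. unfold arens1, hat.
    change (F (fun x => r * dmulr A f c x) = r * F (dmulr A f c)).
    apply Hsc; apply Hdf; assumption.
  - exists (MF * ba_norm A c). intros h c0 Hh Hc0 Hb. unfold arens1, hat.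
    eapply Rle_trans; [apply (HB _ (c0 * ba_norm A c)); [apply Hdf, Hh| |]|].
    + apply Rmult_le_pos; [exact Hc0|apply ba_norm_ge0].
    + intro x. unfold dmulr. eapply Rle_trans; [apply Hb|].
      rewrite Rmult_assoc. apply Rmult_le_compat_l; [exact Hc0|apply ba_normM].
    + right; ring.
Qed.

Lemma key (A : BanachAlgebra) (H G : (A->R)->R) (g : A -> R) :
  is_bidual A H -> Z1 A H -> is_bidual A G -> is_dual A g ->
  arens1 A H G g = arens2 A H G g.
Proof.
  intros HH HZ HG Hg.
  destruct (interp_fun A G HG) as [af Haf].
  set (N := fun S : Ddir A => hat A (af S)).
  assert (Hconv : wstar_conv A (Ddir A) N G).
  { intros f Hf eps Heps. exists [exist _ f Hf]. intros i Hi.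
    unfold N, hat. assert (Hx := Haf i (exist _ f Hf)); simpl in Hx; rewrite Hx.
    - simpl. unfold Rminus. rewrite Rplus_opp_r, Rabs_R0. exact Heps.
    - apply Hi. left; reflexivity. }
  assert (Hlim := HZ (Ddir A) N G (fun i => hat_bidual A (af i)) HG Hconv g Hg).
  set (phi := fun b => H (fun a => g (ba_mul A a b))).
  assert (Hphi : is_dual A phi) by (apply phi_dual; assumption).
  assert (Hev : forall i : Ddir A, dir_le (Ddir A) [exist _ phi Hphi] i ->
             arens1 A H (N i) g = arens2 A H G g).
  { intros i Hi. change (phi (af i) = G phi).
    apply (Haf i (exist _ phi Hphi)). apply Hi. left; reflexivity. }
  set (d := arens1 A H G g - arens2 A H G g).
  assert (Hd : forall eps, 0 < eps -> Rabs d < eps).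
  { intros eps Heps. destruct (Hlim eps Heps) as [i0 Hi0].
    destruct (dir_up (Ddir A) i0 [exist _ phi Hphi]) as [k [Hk1 Hk2]].
    specialize (Hi0 k Hk1). rewrite (Hev k Hk2) in Hi0.
    unfold d. rewrite Rabs_minus_sym. exact Hi0. }
  destruct (Req_dec d 0) as [E|E]; [unfold d in E; lra|].
  exfalso. specialize (Hd (Rabs d) (Rabs_pos_lt _ E)). lra.
Qed.

Theorem mainTheorem14 (A : BanachAlgebra) :
  dual_factors A ->
  (forall (a : A) (F : (A -> R) -> R), is_bidual A F -> Z1 A (arens1 A (hat A a) F)) ->
  arens_regular A.
Proof.
  intros Hdf HZ F G HF HG f Hf.
  destruct (proj2 Hdf f Hf) as [g [c [Hg Hfe]]].
  assert (E : f = dmulr A g c) by (extensionality x; apply Hfe). subst f.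
  set (H := arens1 A (hat A c) F).
  transitivity (arens1 A H G g).
  - unfold H, arens1, hat, dmulr. f_equal. extensionality a. f_equal.
    extensionality b. rewrite ba_mulA. reflexivity.
  - rewrite (key A H G g (H_bidual A F c Hdf HF) (HZ c F HF) HG Hg).
    unfold H, arens2, arens1, hat, dmulr. f_equal. extensionality b. f_equal.
    extensionality a. rewrite ba_mulA. reflexivity.
Qed.
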